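(* Let $F$ be a smooth distribution supported on $[0,1]$ whose CDF is convex (equivalently, whose PDF $f$ is non-decreasing). Then $\tilde{O}(\epsilon^{-1/2})$ oracle queries to $F$ and $f$ suffice to learn $F$ within Lévy distance $O(\epsilon)$.
   Context: A distribution is smooth if it has no point masses and a PDF $f$ of class $C^1$. Oracle query model: an algorithm adaptively chooses points $x$ and receives the exact values $F(x)$ and/or $f(x)$; after its queries it must output a distribution $\hat F$ with $\mathrm{L\acute{e}vy}(F,\hat F)$ at most the target accuracy, where $\mathrm{L\acute{e}vy}(F,G)=\inf\{\epsilon: F(v-\epsilon)-\epsilon\le G(v)\le F(v+\epsilon)+\epsilon\ \forall v\}$. $\tilde{O}$ hides polylog$(1/\epsilon)$ factors. *)

(* Defs.v *)
From Stdlib Require Import Reals Lra List.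
From Coquelicot Require Import Coquelicot.
Open Scope R_scope.

Definition is_cdf (G : R -> R) : Prop :=
  (forall x y, x <= y -> G x <= G y) /\
  (forall x, filterlim G (at_right x) (locally (G x))) /\
  is_lim G m_infty 0 /\ is_lim G p_infty 1.

Definition levy (F G : R -> R) : Rbar :=
  Glb_Rbar (fun e => forall v, F (v - e) - e <= G v /\ G v <= F (v + e) + e).

(* F is a smooth distribution supported on [0,1] with PDF f:
   no point masses (F(x) = int_0^x f for x in [0,1], 0 before, 1 after),
   f >= 0, f = 0 outside [0,1], and f is C^1 on [0,1]
   (it agrees on [0,1] with a C^1 function on R). *)
Definition smooth_dist01 (F f : R -> R) : Prop :=
  (forall x, 0 <= f x) /\
  (forall x, (x < 0 \/ 1 < x) -> f x = 0) /\
  (forall x, x <= 0 -> F x = 0) /\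
  (forall x, 1 <= x -> F x = 1) /\
  (forall x, 0 <= x <= 1 -> ex_RInt f 0 x /\ F x = RInt f 0 x) /\
  (exists g : R -> R,
      (forall x, ex_derive g x) /\ (forall x, continuous (Derive g) x) /\
      (forall x, 0 <= x <= 1 -> f x = g x)).

Definition convex_on01 (F : R -> R) : Prop :=
  forall x y t, 0 <= x <= 1 -> 0 <= y <= 1 -> 0 <= t <= 1 ->
    F (t * x + (1 - t) * y) <= t * F x + (1 - t) * F y.

(* Deterministic adaptive oracle-query algorithm: a history is the list of
   (query point, (F value, f value)); [next] picks the next query point from
   the history, [output] returns the learned CDF from the full transcript. *)
Definition history := list (R * (R * R)).
Record algorithm := { next : history -> R ; output : history -> (R -> R) }.

Fixpoint transcript (A : algorithm) (F f : R -> R) (n : nat) : history :=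
  match n with
  | O => nil
  | S m => let h := transcript A F f m in
           let x := next A h in h ++ ((x, (F x, f x)) :: nil)
  end.

Definition learns_with (A : algorithm) (n : nat) (delta : R) : Prop :=
  forall F f, smooth_dist01 F f -> convex_on01 F ->
    let Fh := output A (transcript A F f n) in
    is_cdf Fh /\ Rbar_le (levy F Fh) (Finite delta).

(* Main.v *)
Require Import Defs.
From Stdlib Require Import Reals Lra Lia List ZArith.
From Coquelicot Require Import Coquelicot.
Open Scope R_scope.

Lemma conv3 (F : R -> R) : convex_on01 F -> forall x y z,
  0 <= x -> x <= y -> y <= z -> z <= 1 -> x < z ->
  F y * (z - x) <= (z - y) * F x + (y - x) * F z.
Proof.
  intros Hc x y z H0 H1 H2 H3 H4.
  set (t := (z - y) / (z - x)).
  assert (Ht0 : 0 <= t) by (unfold t; apply Rmult_le_pos; [lra| left; apply Rinv_0_lt_compat; lra]).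
  assert (Ht1 : t <= 1).
  { unfold t. apply (Rmult_le_reg_r (z - x)); [lra|]. field_simplify; lra. }
  assert (Hy : t * x + (1 - t) * z = y) by (unfold t; field; lra).
  pose proof (Hc x z t ltac:(lra) ltac:(lra) ltac:(lra)) as H.
  rewrite Hy in H.
  assert (E1 : (t * F x + (1 - t) * F z) * (z - x) = (z - y) * F x + (y - x) * F z)
    by (unfold t; field; lra).
  rewrite <- E1. apply Rmult_le_compat_r; lra.
Qed.

Lemma cont_f (F f : R -> R) : smooth_dist01 F f -> forall a, 0 <= a <= 1 ->
  forall d, 0 < d -> exists r, 0 < r /\ forall x, 0 <= x <= 1 -> Rabs (x - a) < r ->
   Rabs (f x - f a) < d.
Proof.
  intros (_ & _ & _ & _ & _ & g & Hg & _ & Hfg) a Ha d Hd.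
  pose proof (ex_derive_continuous g a (Hg a)) as Hc.
  unfold continuous in Hc. pose proof (proj1 (filterlim_locally (F := locally a) g (g a)) Hc) as Hc2. clear Hc. rename Hc2 into Hc.
  destruct (Hc (mkposreal d Hd)) as [r Hr].
  exists r. split. apply cond_pos.
  intros x Hx Hxa. rewrite !Hfg by auto.
  apply Hr. exact Hxa.
Qed.

Lemma Fdiff (F f : R -> R) : smooth_dist01 F f -> forall x y, 0 <= x -> x <= y -> y <= 1 ->
  ex_RInt f x y /\ F y - F x = RInt f x y.
Proof.
  intros Hs x y H0 H1 H2.
  destruct Hs as (_ & _ & _ & _ & HI & _).
  destruct (HI x ltac:(lra)) as [Ix Fx]. destruct (HI y ltac:(lra)) as [Iy Fy].
  assert (Ixy : ex_RInt f x y) by (apply (ex_RInt_Chasles_2 f 0 x y); [lra|exact Iy]).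
  split; auto.
  rewrite Fx, Fy, <- (RInt_Chasles f 0 x y Ix Ixy). unfold plus; simpl. ring.
Qed.

Lemma RInt_lb (f : R -> R) x y c : x <= y -> ex_RInt f x y ->
  (forall z, x < z < y -> c <= f z) -> c * (y - x) <= RInt f x y.
Proof.
  intros H1 H2 H3.
  assert (E : RInt (fun _ => c) x y = c * (y - x)).
  { rewrite RInt_const. unfold scal; simpl. unfold mult; simpl. ring. }
  rewrite <- E. apply RInt_le; auto. apply ex_RInt_const.
Qed.

Lemma RInt_ub (f : R -> R) x y c : x <= y -> ex_RInt f x y ->
  (forall z, x < z < y -> f z <= c) -> RInt f x y <= c * (y - x).
Proof.
  intros H1 H2 H3.
  assert (E : RInt (fun _ => c) x y = c * (y - x)).
  { rewrite RInt_const. unfold scal; simpl. unfold mult; simpl. ring. }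
  rewrite <- E. apply RInt_le; auto. apply ex_RInt_const.
Qed.

Lemma tangent (F f : R -> R) : smooth_dist01 F f -> convex_on01 F ->
  forall a u, 0 <= a <= 1 -> 0 <= u <= 1 -> F a + f a * (u - a) <= F u.
Proof.
  intros Hs Hc a u Ha Hu.
  destruct (Rtotal_order a u) as [Hlt | [Heq | Hgt]].
  - destruct (Rle_or_lt (F a + f a * (u - a)) (F u)) as [|Hbad]; auto. exfalso.
    set (d := (F a + f a * (u - a) - F u) / (u - a)).
    assert (Hd : 0 < d) by (unfold d; apply Rdiv_lt_0_compat; lra).
    destruct (cont_f F f Hs a Ha (d/2) ltac:(lra)) as [r [Hr Hrf]].
    set (t := Rmin (r / 2) (u - a)).
    assert (Ht : 0 < t) by (unfold t; apply Rmin_glb_lt; lra).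
    assert (Ht2 : t <= u - a) by apply Rmin_r.
    assert (Ht3 : t < r) by (unfold t; pose proof (Rmin_l (r/2) (u-a)); lra).
    destruct (Fdiff F f Hs a (a + t) ltac:(lra) ltac:(lra) ltac:(lra)) as [Ie Ee].
    assert (Hlb : (f a - d/2) * (a + t - a) <= RInt f a (a + t)).
    { apply RInt_lb; [lra| exact Ie |]. intros z Hz.
      assert (Hz' : Rabs (f z - f a) < d/2) by (apply Hrf; [lra| rewrite Rabs_right; lra]).
      apply Rabs_def2 in Hz'. lra. }
    pose proof (conv3 F Hc a (a + t) u ltac:(lra) ltac:(lra) ltac:(lra) ltac:(lra) ltac:(lra)) as Hcv.
    assert (Hdd : d * (u - a) = F a + f a * (u - a) - F u) by (unfold d; field; lra).
    assert (H1 : (F (a + t) - F a) * (u - a) <= t * (F u - F a)) by nra.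
    assert (H2 : (f a - d/2) * t * (u - a) <= t * (F u - F a)) by nra.
    assert (H3 : (f a - d/2) * (u - a) <= F u - F a).
    { apply (Rmult_le_reg_l t); [lra|]. nra. }
    nra.
  - subst. lra.
  - destruct (Rle_or_lt (F a + f a * (u - a)) (F u)) as [|Hbad]; auto. exfalso.
    set (d := (F a + f a * (u - a) - F u) / (a - u)).
    assert (Hd : 0 < d) by (unfold d; apply Rdiv_lt_0_compat; lra).
    destruct (cont_f F f Hs a Ha (d/2) ltac:(lra)) as [r [Hr Hrf]].
    set (t := Rmin (r / 2) (a - u)).
    assert (Ht : 0 < t) by (unfold t; apply Rmin_glb_lt; lra).
    assert (Ht2 : t <= a - u) by apply Rmin_r.
    assert (Ht3 : t < r) by (unfold t; pose proof (Rmin_l (r/2) (a-u)); lra).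
    destruct (Fdiff F f Hs (a - t) a ltac:(lra) ltac:(lra) ltac:(lra)) as [Ie Ee].
    assert (Hub : RInt f (a - t) a <= (f a + d/2) * (a - (a - t))).
    { apply RInt_ub; [lra| exact Ie |]. intros z Hz.
      assert (Hz' : Rabs (f z - f a) < d/2) by (apply Hrf; [lra| rewrite Rabs_left; lra]).
      apply Rabs_def2 in Hz'. lra. }
    pose proof (conv3 F Hc u (a - t) a ltac:(lra) ltac:(lra) ltac:(lra) ltac:(lra) ltac:(lra)) as Hcv.
    assert (Hdd : d * (a - u) = F a + f a * (u - a) - F u) by (unfold d; field; lra).
    assert (H1 : t * (F a - F u) <= (F a - F (a - t)) * (a - u)) by nra.
    assert (H2 : t * (F a - F u) <= (f a + d/2) * t * (a - u)) by nra.
    assert (H3 : F a - F u <= (f a + d/2) * (a - u)).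
    { apply (Rmult_le_reg_l t); [lra|]. nra. }
    nra.
Qed.

Definition stepA (v : R) (acc p : R * R) : R * R :=
  if Rle_dec (fst p) v then (if Rlt_dec (fst acc) (fst p) then p else acc) else acc.
Definition stepB (v : R) (acc p : R * R) : R * R :=
  if Rlt_dec v (fst p) then (if Rlt_dec (fst p) (fst acc) then p else acc) else acc.
Definition CF (p q : R * R) (v : R) : R :=
  snd p + (snd q - snd p) * (v - fst p) / (fst q - fst p).
Definition ptsOf (h : history) : list (R * R) := map (fun e => (fst e, fst (snd e))) h.
Definition outF (h : history) (v : R) : R :=
  if Rlt_dec v 0 then 0 else if Rle_dec 1 v then 1 else
  CF (fold_left (stepA v) (ptsOf h) (0,0)) (fold_left (stepB v) (ptsOf h) (1,1)) v.

Lemma selA_gen v pts : forall acc, let r := fold_left (stepA v) pts acc in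
  (r = acc \/ In r pts) /\ fst acc <= fst r /\ (fst acc <= v -> fst r <= v) /\
  (forall p, In p pts -> fst p <= v -> fst p <= fst r).
Proof.
  induction pts as [|p pts IH]; intros acc; simpl.
  - split; [auto|]. split; [lra|]. split; [auto|]. intros p [].
  - destruct (IH (stepA v acc p)) as (H1 & H2 & H3 & H4).
    unfold stepA in *.
    destruct (Rle_dec (fst p) v) as [Hp|Hp]; [destruct (Rlt_dec (fst acc) (fst p)) as [Hq|Hq]|].
    + split; [destruct H1 as [H1|H1]; [right; left; auto| right; right; auto]|].
      split; [lra|]. split; [intros; apply H3; auto|].
      intros p' [E|Hin]; [subst; lra| apply H4; auto].
    + split; [destruct H1 as [H1|H1]; [left; auto| right; right; auto]|].
      split; [lra|]. split; [auto|].
      intros p' [E|Hin]; [subst; lra| apply H4; auto].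
    + split; [destruct H1 as [H1|H1]; [left; auto| right; right; auto]|].
      split; [lra|]. split; [auto|].
      intros p' [E|Hin]; [subst; lra| apply H4; auto].
Qed.

Lemma selB_gen v pts : forall acc, let r := fold_left (stepB v) pts acc in
  (r = acc \/ In r pts) /\ fst r <= fst acc /\ (v < fst acc -> v < fst r) /\
  (forall p, In p pts -> v < fst p -> fst r <= fst p).
Proof.
  induction pts as [|p pts IH]; intros acc; simpl.
  - split; [auto|]. split; [lra|]. split; [auto|]. intros p [].
  - destruct (IH (stepB v acc p)) as (H1 & H2 & H3 & H4).
    unfold stepB in *.
    destruct (Rlt_dec v (fst p)) as [Hp|Hp]; [destruct (Rlt_dec (fst p) (fst acc)) as [Hq|Hq]|].
    + split; [destruct H1 as [H1|H1]; [right; left; auto| right; right; auto]|].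
      split; [lra|]. split; [intros; apply H3; auto|].
      intros p' [E|Hin]; [subst; lra| apply H4; auto].
    + split; [destruct H1 as [H1|H1]; [left; auto| right; right; auto]|].
      split; [lra|]. split; [auto|].
      intros p' [E|Hin]; [subst; lra| apply H4; auto].
    + split; [destruct H1 as [H1|H1]; [left; auto| right; right; auto]|].
      split; [lra|]. split; [auto|].
      intros p' [E|Hin]; [subst; lra| apply H4; auto].
Qed.

Definition CFF (F : R -> R) a b v := F a + (F b - F a) * (v - a) / (b - a).

Lemma in_pts h p : In p (ptsOf h) -> exists e, In e h /\ p = (fst e, fst (snd e)).
Proof.
  unfold ptsOf. intros H. apply in_map_iff in H. destruct H as [e [E H]]. eauto.
Qed.

Lemma out_eq (F : R -> R) (h : history) v :
  F 0 = 0 -> F 1 = 1 -> (forall e, In e h -> fst (snd e) = F (fst e)) ->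
  0 <= v < 1 -> exists a b, 0 <= a <= v /\ v < b <= 1 /\
   (a = 0 \/ In a (map fst h)) /\ (b = 1 \/ In b (map fst h)) /\
   (forall x, In x (map fst h) -> x <= v -> x <= a) /\
   (forall x, In x (map fst h) -> v < x -> b <= x) /\
   outF h v = CFF F a b v.
Proof.
  intros F0 F1 Hh Hv.
  destruct (selA_gen v (ptsOf h) (0,0)) as (A1 & A2 & A3 & A4).
  destruct (selB_gen v (ptsOf h) (1,1)) as (B1 & B2 & B3 & B4).
  simpl in *.
  set (pa := fold_left (stepA v) (ptsOf h) (0,0)) in *.
  set (pb := fold_left (stepB v) (ptsOf h) (1,1)) in *.
  assert (Ha : snd pa = F (fst pa) /\ (fst pa = 0 \/ In (fst pa) (map fst h))).
  { destruct A1 as [E|Hin]; [rewrite E; simpl; auto|].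
    destruct (in_pts h pa Hin) as [e [He E]]. rewrite E; simpl. split; auto.
    right. apply in_map; auto. }
  assert (Hb : snd pb = F (fst pb) /\ (fst pb = 1 \/ In (fst pb) (map fst h))).
  { destruct B1 as [E|Hin]; [rewrite E; simpl; auto|].
    destruct (in_pts h pb Hin) as [e [He E]]. rewrite E; simpl. split; auto.
    right. apply in_map; auto. }
  exists (fst pa), (fst pb). repeat split; try lra; try tauto.
  - intros x Hx Hxv. apply in_map_iff in Hx. destruct Hx as [e [E He]].
    subst x. apply (A4 (fst e, fst (snd e)) ltac:(apply in_map_iff; eauto)); simpl; lra.
  - intros x Hx Hxv. apply in_map_iff in Hx. destruct Hx as [e [E He]].
    subst x. apply (B4 (fst e, fst (snd e)) ltac:(apply in_map_iff; eauto)); simpl; lra.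
  - unfold outF. destruct (Rlt_dec v 0); [lra|]. destruct (Rle_dec 1 v); [lra|].
    fold pa pb. unfold CF, CFF. rewrite (proj1 Ha), (proj1 Hb). reflexivity.
Qed.

Lemma out_char (F : R -> R) (h : history) v a b :
  F 0 = 0 -> F 1 = 1 -> (forall e, In e h -> fst (snd e) = F (fst e)) ->
  0 <= v < 1 -> 0 <= a <= v -> v < b <= 1 ->
  (a = 0 \/ In a (map fst h)) -> (b = 1 \/ In b (map fst h)) ->
  (forall x, In x (map fst h) -> ~ (a < x < b)) ->
  outF h v = CFF F a b v.
Proof.
  intros F0 F1 Hh Hv Ha Hb Sa Sb Hg.
  destruct (out_eq F h v F0 F1 Hh Hv) as (a' & b' & Ha' & Hb' & Sa' & Sb' & Ma & Mb & E).
  rewrite E.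
  assert (a = a').
  { destruct (Rtotal_order a a') as [L|[L|L]]; auto; exfalso.
    - destruct Sa' as [Z|Z]; [lra|]. apply (Hg a' Z); lra.
    - destruct Sa as [Z|Z]; [lra|]. specialize (Ma a Z). lra. }
  assert (b = b').
  { destruct (Rtotal_order b b') as [L|[L|L]]; auto; exfalso.
    - destruct Sb as [Z|Z]; [lra|]. specialize (Mb b Z). lra.
    - destruct Sb' as [Z|Z]; [lra|]. apply (Hg b' Z); lra. }
  subst; reflexivity.
Qed.

Lemma CFF_bounds F a b v : a < b -> F a <= F b -> a <= v <= b ->
  F a <= CFF F a b v <= F b.
Proof.
  intros H1 H2 H3. unfold CFF.
  assert (0 <= (v - a) / (b - a) <= 1).
  { split. apply Rmult_le_pos; [lra| left; apply Rinv_0_lt_compat; lra].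
    apply (Rmult_le_reg_r (b - a)); [lra|]. field_simplify; lra. }
  replace ((F b - F a) * (v - a) / (b - a)) with ((F b - F a) * ((v - a) / (b - a))) by (field; lra).
  nra.
Qed.

Lemma CFF_mono F a b v w : a < b -> F a <= F b -> v <= w -> CFF F a b v <= CFF F a b w.
Proof.
  intros H1 H2 H3. unfold CFF.
  assert (Hk : 0 <= (F b - F a) / (b - a)) by (apply Rmult_le_pos; [lra| left; apply Rinv_0_lt_compat; lra]).
  replace ((F b - F a) * (v - a) / (b - a)) with ((F b - F a) / (b - a) * (v - a)) by (field; lra).
  replace ((F b - F a) * (w - a) / (b - a)) with ((F b - F a) / (b - a) * (w - a)) by (field; lra).
  nra.
Qed.

Lemma out_cdf (F : R -> R) (h : history) :
  (forall x y, x <= y -> F x <= F y) -> F 0 = 0 -> F 1 = 1 ->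
  (forall e, In e h -> fst (snd e) = F (fst e)) -> is_cdf (outF h).
Proof.
  intros Fm F0 F1 Hh.
  assert (Olt : forall v, v < 0 -> outF h v = 0).
  { intros v Hv. unfold outF. destruct (Rlt_dec v 0); [auto|lra]. }
  assert (Oge : forall v, 1 <= v -> outF h v = 1).
  { intros v Hv. unfold outF. destruct (Rlt_dec v 0); [lra|]. destruct (Rle_dec 1 v); [auto|lra]. }
  assert (Omid : forall v, 0 <= v < 1 -> 0 <= outF h v <= 1).
  { intros v Hv. destruct (out_eq F h v F0 F1 Hh Hv) as (a & b & Ha & Hb & _ & _ & _ & _ & E).
    rewrite E. pose proof (CFF_bounds F a b v ltac:(lra) (Fm a b ltac:(lra)) ltac:(lra)).
    pose proof (Fm 0 a ltac:(lra)). pose proof (Fm b 1 ltac:(lra)). lra. }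
  split; [|split; [|split]].
  - intros x y Hxy.
    destruct (Rlt_dec x 0) as [Hx|Hx].
    + rewrite (Olt x Hx). destruct (Rlt_dec y 0) as [Hy|Hy]; [rewrite Olt; lra|].
      destruct (Rle_dec 1 y) as [Hy'|Hy']; [rewrite Oge; lra|]. apply Omid; lra.
    + destruct (Rle_dec 1 x) as [Hx'|Hx']. { rewrite !Oge; lra. }
      destruct (Rle_dec 1 y) as [Hy'|Hy']. { rewrite (Oge y Hy'). apply Omid; lra. }
      destruct (out_eq F h x F0 F1 Hh ltac:(lra)) as (a & b & Ha & Hb & Sa & Sb & Ma & Mb & E).
      destruct (Rlt_dec y b) as [Hyb|Hyb].
      * rewrite E, (out_char F h y a b F0 F1 Hh ltac:(lra) ltac:(lra) ltac:(lra) Sa Sb).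
        { apply CFF_mono; auto; [lra| apply Fm; lra]. }
        intros z Hz Hz2. destruct (Rle_dec z x) as [Hzx|Hzx].
        -- specialize (Ma z Hz Hzx). lra.
        -- specialize (Mb z Hz ltac:(lra)). lra.
      * destruct Sb as [Sb|Sb]; [lra|].
        destruct (out_eq F h y F0 F1 Hh ltac:(lra)) as (a' & b' & Ha' & Hb' & Sa' & Sb' & Ma' & Mb' & E').
        specialize (Ma' b Sb ltac:(lra)).
        rewrite E, E'.
        pose proof (CFF_bounds F a b x ltac:(lra) (Fm a b ltac:(lra)) ltac:(lra)).
        pose proof (CFF_bounds F a' b' y ltac:(lra) (Fm a' b' ltac:(lra)) ltac:(lra)).
        pose proof (Fm b a' Ma'). lra.
  - intros x. apply (proj2 (filterlim_locally (F := at_right x) (outF h) (outF h x))).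
    intros eps.
    destruct (Rlt_dec x 0) as [Hx|Hx].
    + exists (mkposreal (- x) ltac:(lra)). intros y Hy Hxy.
      change (Rabs (y - x) < - x) in Hy. apply Rabs_def2 in Hy.
      change (Rabs (outF h y - outF h x) < eps). rewrite !Olt by lra.
      rewrite Rminus_0_r, Rabs_R0. apply cond_pos.
    + destruct (Rle_dec 1 x) as [Hx'|Hx'].
      * exists (mkposreal 1 ltac:(lra)). intros y Hy Hxy.
        change (Rabs (outF h y - outF h x) < eps). rewrite !Oge by lra.
        rewrite Rminus_eq_0, Rabs_R0. apply cond_pos.
      * destruct (out_eq F h x F0 F1 Hh ltac:(lra)) as (a & b & Ha & Hb & Sa & Sb & Ma & Mb & E).
        set (K := (F b - F a) / (b - a)).
        assert (HK : 0 <= K) by (apply Rmult_le_pos; [pose proof (Fm a b ltac:(lra)); lra| left; apply Rinv_0_lt_compat; lra]).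
        assert (Hd : 0 < Rmin (b - x) (eps / (K + 1))).
        { apply Rmin_glb_lt; [lra|]. apply Rdiv_lt_0_compat; [apply cond_pos| lra]. }
        exists (mkposreal _ Hd). intros y Hy Hxy.
        change (Rabs (y - x) < Rmin (b - x) (eps / (K + 1))) in Hy. apply Rabs_def2 in Hy.
        pose proof (Rmin_l (b - x) (eps / (K + 1))). pose proof (Rmin_r (b - x) (eps / (K + 1))).
        change (Rabs (outF h y - outF h x) < eps).
        rewrite E, (out_char F h y a b F0 F1 Hh ltac:(lra) ltac:(lra) ltac:(lra) Sa Sb).
        2:{ intros z Hz Hz2. destruct (Rle_dec z x) as [Hzx|Hzx].
            -- specialize (Ma z Hz Hzx). lra.
            -- specialize (Mb z Hz ltac:(lra)). lra. }
        unfold CFF.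
        replace (F a + (F b - F a) * (y - a) / (b - a) - (F a + (F b - F a) * (x - a) / (b - a)))
          with (K * (y - x)) by (unfold K; field; lra).
        rewrite Rabs_right by nra.
        assert (eps / (K + 1) * (K + 1) = eps) by (field; lra).
        assert (K * (y - x) <= (K + 1) * (y - x)) by nra.
        pose proof (cond_pos eps). nra.
  - apply is_lim_ext_loc with (fun _ => 0); [|apply is_lim_const].
    exists 0. intros y Hy. symmetry. apply Olt; auto.
  - apply is_lim_ext_loc with (fun _ => 1); [|apply is_lim_const].
    exists 1. intros y Hy. symmetry. apply Oge; lra.
Qed.

Record st := mkst { si : nat; sj : nat; slo : R; shi : R }.
Definition phiP (F f : R -> R) (N1 i : nat) (x : R) : R :=
  if Nat.ltb i N1 then x + F x else f x / (1 + f x).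
Definition phiE (N1 i : nat) (e : R * (R * R)) : R :=
  if Nat.ltb i N1 then fst e + fst (snd e) else snd (snd e) / (1 + snd (snd e)).
Definition lev (N1 : nat) (h : R) (i : nat) : R :=
  if Nat.ltb i N1 then INR (S i) * h else INR (S (i - N1)) * h.
Definition stepS (N1 : nat) (h : R) (L : nat) (s : st) (e : R * (R * R)) : st :=
  let lo' := if Rlt_dec (phiE N1 (si s) e) (lev N1 h (si s)) then fst e else slo s in
  let hi' := if Rlt_dec (phiE N1 (si s) e) (lev N1 h (si s)) then shi s else fst e in
  if Nat.eqb (S (sj s)) L then mkst (S (si s)) 0 0 1 else mkst (si s) (S (sj s)) lo' hi'.
Definition init : st := mkst 0 0 0 1.
Definition midS (s : st) : R := (slo s + shi s) / 2.
Definition algo (N1 : nat) (h : R) (L : nat) : algorithm :=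
  {| next := fun hs => midS (fold_left (stepS N1 h L) hs init); output := outF |}.

Definition stk N1 h L F f k := fold_left (stepS N1 h L) (transcript (algo N1 h L) F f k) init.

Lemma stk_S N1 h L F f k : stk N1 h L F f (S k) =
  let x := midS (stk N1 h L F f k) in stepS N1 h L (stk N1 h L F f k) (x, (F x, f x)).
Proof.
  unfold stk at 1. simpl. rewrite fold_left_app. simpl. reflexivity.
Qed.

Lemma trans_in N1 h L F f n : forall e, In e (transcript (algo N1 h L) F f n) ->
  fst (snd e) = F (fst e) /\ snd (snd e) = f (fst e) /\
  exists k, (k < n)%nat /\ fst e = midS (stk N1 h L F f k).
Proof.
  induction n as [|n IH]; intros e He; simpl in He; [destruct He|].
  apply in_app_or in He. destruct He as [He|[He|[]]].
  - destruct (IH e He) as (H1 & H2 & k & Hk & H3). repeat split; auto. exists k; split; auto.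
  - subst e. simpl. repeat split; auto. exists n. split; [lia| reflexivity].
Qed.

Lemma binsearch (F f : R -> R) N1 h L N a b :
  (1 <= L)%nat ->
  (forall i x y, 0 <= x -> x <= y -> y <= 1 -> phiP F f N1 i x <= phiP F f N1 i y) ->
  0 <= a -> a < b -> b <= 1 ->
  (forall k, (k < N * L)%nat -> ~ (a < midS (stk N1 h L F f k) < b)) ->
  forall i, (i < N)%nat -> phiP F f N1 i a < lev N1 h i -> lev N1 h i <= phiP F f N1 i b ->
  b - a <= / 2 ^ L.
Proof.
  intros HL Hmon Ha Hab Hb Hgap.
  set (P := fun i => phiP F f N1 i a < lev N1 h i /\ lev N1 h i <= phiP F f N1 i b).
  assert (Inv : forall k, (k <= N * L)%nat ->
    let s := stk N1 h L F f k in
    (si s * L + sj s = k)%nat /\ (sj s < L)%nat /\ 0 <= slo s /\ slo s <= shi s /\ shi s <= 1 /\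
    shi s - slo s = / 2 ^ (sj s) /\ (P (si s) -> slo s <= a /\ b <= shi s) /\
    (forall i, (i < si s)%nat -> P i -> b - a <= / 2 ^ L)).
  { intros k; induction k as [|k IH]; intros Hk.
    - simpl. unfold stk; simpl. repeat split; simpl; try lia; try lra.
      all: try (intros; lra). all: try (intros; lia).
    - specialize (IH ltac:(lia)). rewrite stk_S. cbv zeta.
      set (s := stk N1 h L F f k) in *.
      set (x := midS s).
      destruct IH as (C1 & C2 & B1 & B2 & B3 & W & Hin & Hdone).
      assert (Hx : slo s <= x <= shi s) by (unfold x, midS; lra).
      assert (Hxg : ~ (a < x < b)) by (apply Hgap; lia).
      assert (Ephi : phiE N1 (si s) (x, (F x, f x)) = phiP F f N1 (si s) x)
        by (unfold phiE, phiP; simpl; reflexivity).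
      set (c := Rlt_dec (phiE N1 (si s) (x, (F x, f x))) (lev N1 h (si s))).
      set (lo' := if c then x else slo s).
      set (hi' := if c then shi s else x).
      assert (Wn : hi' - lo' = / 2 ^ (S (sj s))).
      { simpl. rewrite Rinv_mult. unfold lo', hi'. destruct c; unfold x, midS; lra. }
      assert (Bn : 0 <= lo' /\ lo' <= hi' /\ hi' <= 1) by (unfold lo', hi'; destruct c; lra).
      assert (Inn : P (si s) -> lo' <= a /\ b <= hi').
      { intros HP. destruct (Hin HP) as [Hla Hbh]. destruct HP as [HP1 HP2].
        unfold lo', hi'. destruct c as [Hc|Hc]; rewrite Ephi in Hc.
        - split; [|lra]. destruct (Rle_dec x a) as [|Hxa]; auto. exfalso.
          assert (b <= x) by lra. pose proof (Hmon (si s) b x ltac:(lra) ltac:(lra) ltac:(lra)). lra.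
        - split; [lra|]. destruct (Rle_dec b x) as [|Hxb]; auto. exfalso.
          assert (x <= a) by lra. pose proof (Hmon (si s) x a ltac:(lra) ltac:(lra) ltac:(lra)). lra. }
      unfold stepS. cbv zeta. fold c. fold lo' hi'.
      destruct (Nat.eqb (S (sj s)) L) eqn:EL.
      + apply Nat.eqb_eq in EL. simpl. repeat split; try lia; try lra.
        all: try (intros; lra).
        intros i Hi HP. destruct (Nat.eq_dec i (si s)) as [->|Hne].
        -- destruct (Inn HP). rewrite <- EL, <- Wn. lra.
        -- apply (Hdone i); auto; lia.
      + apply Nat.eqb_neq in EL. simpl. repeat split; try lia; try lra; try tauto. }
  intros i Hi HP1 HP2.
  destruct (Inv (N * L)%nat ltac:(lia)) as (C1 & C2 & _ & _ & _ & _ & _ & Hdone).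
  apply (Hdone i); [|split; auto].
  set (s := stk N1 h L F f (N * L)) in *.
  assert (si s = N) by nia. lia.
Qed.

Lemma trans_mem N1 h L F f n : forall k, (k < n)%nat ->
  In (midS (stk N1 h L F f k)) (map fst (transcript (algo N1 h L) F f n)).
Proof.
  induction n as [|n IH]; intros k Hk; [lia|].
  simpl. rewrite map_app. apply in_or_app.
  destruct (Nat.eq_dec k n) as [->|Hne].
  - right. simpl. left. reflexivity.
  - left. apply IH. lia.
Qed.

Lemma level_lemma (h : R) : 0 < h -> forall K y, 0 <= y -> y < INR K * h ->
  exists j, (j < K)%nat /\ INR j * h <= y < INR (S j) * h.
Proof.
  intros Hh K. induction K as [|K IH]; intros y Hy1 Hy2.
  - simpl in Hy2. lra.
  - destruct (Rlt_dec y (INR K * h)) as [Hl|Hl].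
    + destruct (IH y Hy1 Hl) as [j [Hj1 Hj2]]. exists j. split; [lia|auto].
    + exists K. split; [lia|]. lra.
Qed.

Lemma piece (Fa Fb Fu al be a b v eps h : R) :
  a <= v -> v + eps < b -> 0 < eps -> 0 <= h -> h * h <= eps ->
  0 <= al -> al <= be ->
  al * (b - a) <= Fb - Fa ->
  (b - a) + (Fb - Fa) <= h ->
  be - al <= h * (1 + al) * (1 + be) ->
  Fa + al * (v + eps - a) <= Fu -> Fb + be * (v + eps - b) <= Fu ->
  Fa + (Fb - Fa) * (v - a) / (b - a) - eps <= Fu.
Proof.
  intros H1 H2 He Hh Hhe Ha Hab HFa D1 D2 TA TB.
  set (w := b - a). set (t := v - a). set (r := b - v).
  assert (Hw : 0 < w) by (unfold w; lra).
  assert (Ht : 0 <= t) by (unfold t; lra).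
  assert (Hr : 0 < r) by (unfold r; lra).
  assert (Hwtr : w = t + r) by (unfold w, t, r; ring).
  assert (K1 : r * (Fa + al * (v + eps - a)) + t * (Fb + be * (v + eps - b)) <= w * Fu).
  { rewrite Hwtr. nra. }
  assert (K2 : r * (Fa + al * (v + eps - a)) + t * (Fb + be * (v + eps - b)) =
     r * Fa + t * Fb + (al - be) * t * r + eps * (al * r + be * t)) by (unfold r, t; ring).
  assert (HX : r * (1 + al) <= h).
  { assert (r <= w) by (unfold r, w; lra). assert (r * (1 + al) <= w * (1 + al)) by nra.
    unfold w in *. nra. }
  assert (HY : 0 <= t * (1 + be)) by nra.
  assert (K3 : (be - al) * t * r <= eps * (r * (1 + al) + t * (1 + be))).
  { assert (Htr : 0 <= t * r) by nra.
    assert (S1 : (be - al) * (t * r) <= h * (1 + al) * (1 + be) * (t * r)) by nra.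
    assert (S2 : h * (1 + al) * (1 + be) * (t * r) = h * (r * (1 + al)) * (t * (1 + be))) by ring.
    assert (S3 : h * (r * (1 + al)) * (t * (1 + be)) <= h * h * (t * (1 + be))).
    { apply Rmult_le_compat_r; [auto|]. apply Rmult_le_compat_l; auto. }
    assert (S4 : h * h * (t * (1 + be)) <= eps * (t * (1 + be))) by nra.
    assert (0 <= eps * (r * (1 + al))) by (apply Rmult_le_pos; [lra| apply Rmult_le_pos; lra]).
    assert ((be - al) * t * r = (be - al) * (t * r)) by ring.
    assert (eps * (r * (1 + al) + t * (1 + be)) = eps * (r * (1 + al)) + eps * (t * (1 + be))) by ring.
    lra. }
  assert (K4 : r * Fa + t * Fb - eps * w <= w * Fu).
  { rewrite K2 in K1. rewrite Hwtr in *.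
    assert (eps * (r * (1 + al) + t * (1 + be)) = eps * (t + r) + eps * (al * r + be * t)) by ring.
    lra. }
  assert (E : Fa + (Fb - Fa) * t / w = (r * Fa + t * Fb) / w)
    by (apply (Rmult_eq_reg_l w); [| lra]; field_simplify; try lra; rewrite Hwtr; ring).
  rewrite E.
  apply (Rmult_le_reg_l w); [auto|].
  replace (w * ((r * Fa + t * Fb) / w - eps)) with (r * Fa + t * Fb - eps * w) by (field; lra).
  exact K4.
Qed.

Lemma learn (M L : nat) (eps : R) :
  (1 <= M)%nat -> (1 <= L)%nat -> 0 < eps -> / INR M * / INR M <= eps -> / 2 ^ L <= eps ->
  learns_with (algo (2 * M) (/ INR M) L) (3 * M * L) eps.
Proof.
  intros HM HL He Hh HLe F f Hs Hc.
  set (h := / INR M) in *.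
  assert (HMpos : 1 <= INR M) by (apply (le_INR 1); lia).
  assert (Hhp : 0 < h) by (unfold h; apply Rinv_0_lt_compat; lra).
  assert (HhM : INR M * h = 1) by (unfold h; field; lra).
  pose proof Hs as (Hf0 & Hfout & HFl & HFr & _ & _).
  assert (F0 : F 0 = 0) by (apply HFl; lra).
  assert (F1 : F 1 = 1) by (apply HFr; lra).
  assert (Tg := tangent F f Hs Hc).
  assert (Fm01 : forall x y, 0 <= x -> x <= y -> y <= 1 -> F x <= F y).
  { intros x y H1 H2 H3. pose proof (Tg x y ltac:(lra) ltac:(lra)). pose proof (Hf0 x). nra. }
  assert (Fm : forall x y, x <= y -> F x <= F y).
  { intros x y Hxy.
    assert (B : forall z, 0 <= F z <= 1).
    { intros z. destruct (Rle_dec z 0). rewrite HFl; lra. destruct (Rle_dec 1 z). rewrite HFr; lra.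
      pose proof (Fm01 0 z ltac:(lra) ltac:(lra) ltac:(lra)). pose proof (Fm01 z 1 ltac:(lra) ltac:(lra) ltac:(lra)). lra. }
    destruct (Rle_dec x 0). { rewrite (HFl x) by lra. apply B. }
    destruct (Rle_dec 1 y). { rewrite (HFr y) by lra. apply B. }
    apply Fm01; lra. }
  assert (fm : forall x y, 0 <= x -> x <= y -> y <= 1 -> f x <= f y).
  { intros x y H1 H2 H3. destruct (Req_dec x y) as [->|Hne]; [lra|].
    pose proof (Tg x y ltac:(lra) ltac:(lra)). pose proof (Tg y x ltac:(lra) ltac:(lra)).
    assert ((f y - f x) * (y - x) >= 0) by nra.
    destruct (Rle_dec (f x) (f y)); auto. exfalso. nra. }
  assert (Hmon : forall i x y, 0 <= x -> x <= y -> y <= 1 ->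
     phiP F f (2 * M) i x <= phiP F f (2 * M) i y).
  { intros i x y H1 H2 H3. unfold phiP. destruct (Nat.ltb i (2 * M)).
    - pose proof (Fm x y H2). lra.
    - pose proof (fm x y H1 H2 H3). pose proof (Hf0 x).
      apply (Rmult_le_reg_r ((1 + f x) * (1 + f y))); [nra|].
      field_simplify; nra. }
  set (tr := transcript (algo (2 * M) h L) F f (3 * M * L)).
  assert (Hh' : forall e, In e tr -> fst (snd e) = F (fst e)).
  { intros e Hein. apply (trans_in (2 * M) h L F f _ e Hein). }
  cbv zeta. fold tr. unfold algo at 1. simpl output.
  split; [apply (out_cdf F tr Fm F0 F1 Hh')|].
  destruct (Glb_Rbar_correct (fun e => forall v, F (v - e) - e <= outF tr v /\ outF tr v <= F (v + e) + e)) as [Hlb _].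
  apply Hlb. intros v.
  assert (FB : forall z, 0 <= F z <= 1).
  { intros z. pose proof (Fm z 1). pose proof (Fm 0 z). destruct (Rle_dec z 1); destruct (Rle_dec 0 z).
    - split; [rewrite <- F0; auto| rewrite <- F1; auto].
    - rewrite HFl; lra. - rewrite HFr; lra. - lra. }
  destruct (Rlt_dec v 0) as [Hv|Hv].
  { assert (E : outF tr v = 0) by (unfold outF; destruct (Rlt_dec v 0); [auto|lra]).
    rewrite E. rewrite (HFl (v - eps)) by lra. pose proof (FB (v + eps)). lra. }
  destruct (Rle_dec 1 v) as [Hv'|Hv'].
  { assert (E : outF tr v = 1) by (unfold outF; destruct (Rlt_dec v 0); [lra|]; destruct (Rle_dec 1 v); [auto|lra]).
    rewrite E. rewrite (HFr (v + eps)) by lra. pose proof (FB (v - eps)). lra. }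
  destruct (out_eq F tr v F0 F1 Hh' ltac:(lra)) as (a & b & Ha & Hb & Sa & Sb & Ma & Mb & E).
  rewrite E.
  assert (Fab : F a <= F b) by (apply Fm; lra).
  split.
  { pose proof (conv3 F Hc a v b ltac:(lra) ltac:(lra) ltac:(lra) ltac:(lra) ltac:(lra)).
    assert (F v <= CFF F a b v).
    { unfold CFF. apply (Rmult_le_reg_r (b - a)); [lra|].
      replace ((F a + (F b - F a) * (v - a) / (b - a)) * (b - a)) with ((b - v) * F a + (v - a) * F b) by (field; lra).
      lra. }
    pose proof (Fm (v - eps) v ltac:(lra)). lra. }
  destruct (Rle_dec b (v + eps)) as [Hbv|Hbv].
  { pose proof (CFF_bounds F a b v ltac:(lra) Fab ltac:(lra)). pose proof (Fm b (v + eps) Hbv). lra. }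
  assert (Hgap : forall k, (k < 3 * M * L)%nat -> ~ (a < midS (stk (2 * M) h L F f k) < b)).
  { intros k Hk Hin. pose proof (trans_mem (2 * M) h L F f (3 * M * L) k Hk) as Hm. fold tr in Hm.
    destruct (Rle_dec (midS (stk (2 * M) h L F f k)) v) as [Hx|Hx].
    - specialize (Ma _ Hm Hx). lra.
    - specialize (Mb _ Hm ltac:(lra)). lra. }
  assert (NoP : forall i, (i < 3 * M)%nat -> phiP F f (2 * M) i a < lev (2 * M) h i ->
     lev (2 * M) h i <= phiP F f (2 * M) i b -> False).
  { intros i Hi P1 P2.
    pose proof (binsearch F f (2 * M) h L (3 * M) a b HL Hmon ltac:(lra) ltac:(lra) ltac:(lra)
       ltac:(rewrite <- Nat.mul_assoc in Hgap |- *; intros k Hk; apply Hgap; lia) i Hi P1 P2).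
    lra. }
  assert (D1 : (b + F b) - (a + F a) <= h).
  { destruct (Rle_dec ((b + F b) - (a + F a)) h) as [|Hn]; auto. exfalso.
    assert (Hy : a + F a < INR (2 * M) * h).
    { rewrite mult_INR. simpl INR at 1. pose proof (FB b). lra. }
    destruct (level_lemma h Hhp (2 * M) (a + F a) ltac:(pose proof (FB a); lra) Hy) as [j [Hj1 Hj2]].
    apply (NoP j ltac:(lia)); unfold phiP, lev; rewrite (proj2 (Nat.ltb_lt j (2 * M)) Hj1); rewrite S_INR in *; lra. }
  assert (Hfa := Hf0 a). assert (Hfb := Hf0 b). assert (Hfab := fm a b ltac:(lra) ltac:(lra) ltac:(lra)).
  assert (D2 : f b / (1 + f b) - f a / (1 + f a) <= h).
  { destruct (Rle_dec (f b / (1 + f b) - f a / (1 + f a)) h) as [|Hn]; auto. exfalso.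
    assert (Hz0 : 0 <= f a / (1 + f a)) by (apply Rmult_le_pos; [lra| left; apply Rinv_0_lt_compat; lra]).
    assert (Hz1 : f b / (1 + f b) < 1).
    { apply (Rmult_lt_reg_r (1 + f b)); [lra|]. field_simplify; lra. }
    assert (Hy : f a / (1 + f a) < INR M * h) by lra.
    destruct (level_lemma h Hhp M _ Hz0 Hy) as [j [Hj1 Hj2]].
    apply (NoP (2 * M + j)%nat ltac:(lia)); unfold phiP, lev;
      rewrite (proj2 (Nat.ltb_ge (2 * M + j) (2 * M)) ltac:(lia));
      replace (2 * M + j - 2 * M)%nat with j by lia; rewrite S_INR in *; lra. }
  assert (D2' : f b - f a <= h * (1 + f a) * (1 + f b)).
  { assert (Eq : f b / (1 + f b) - f a / (1 + f a) = (f b - f a) / ((1 + f a) * (1 + f b))) by (field; lra).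
    rewrite Eq in D2. apply (Rmult_le_reg_r (/ ((1 + f a) * (1 + f b)))).
    { apply Rinv_0_lt_compat; nra. }
    replace (h * (1 + f a) * (1 + f b) * / ((1 + f a) * (1 + f b))) with h by (field; lra).
    exact D2. }
  unfold CFF.
  pose proof (Tg a b ltac:(lra) ltac:(lra)). pose proof (Tg a (v + eps) ltac:(lra) ltac:(lra)).
  pose proof (Tg b (v + eps) ltac:(lra) ltac:(lra)).
  assert (Hhh : h * h <= eps) by exact Hh.
  pose proof (piece (F a) (F b) (F (v + eps)) (f a) (f b) a b v eps h ltac:(lra) ltac:(lra) He
     ltac:(lra) Hhh Hfa Hfab ltac:(lra) ltac:(lra) D2' ltac:(lra) ltac:(lra)).
  lra.
Qed.

Lemma nat_between x : 0 <= x -> exists n : nat, x <= INR n <= x + 1.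
Proof.
  intros Hx. destruct (archimed x) as [H1 H2].
  assert (Hz : (0 < up x)%Z) by (apply lt_0_IZR; lra).
  exists (Z.to_nat (up x)). rewrite INR_IZR_INZ, Z2Nat.id by lia. lra.
Qed.

Lemma ln2_gt : / 2 < ln 2.
Proof.
  assert (E : exp (/2) * exp (/2) = exp 1) by (rewrite <- exp_plus; f_equal; lra).
  pose proof exp_le_3. pose proof (exp_pos (/2)).
  assert (exp (/2) < 2) by nra.
  rewrite <- (ln_exp (/2)). apply ln_increasing; auto.
Qed.

Theorem theorem6 :
  exists (C1 C2 eps0 : R) (k : nat), 0 < eps0 /\
    forall eps, 0 < eps < eps0 ->
      exists (A : algorithm) (n : nat),
        INR n <= C1 * / sqrt eps * (ln (/ eps)) ^ k /\
        learns_with A n (C2 * eps).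
Proof.
  exists 18, 1, (/3), 1%nat. split; [lra|].
  intros eps [He0 He1].
  set (s := sqrt eps).
  assert (Hs0 : 0 < s) by (apply sqrt_lt_R0; lra).
  assert (Hss : s * s = eps) by (apply sqrt_sqrt; lra).
  assert (Hs1 : s < 1) by nra.
  assert (His : 1 < / s) by (rewrite <- Rinv_1; apply Rinv_lt_contravar; lra).
  assert (Hie : 3 < / eps) by (replace 3 with (/ / 3) by (field); apply Rinv_lt_contravar; lra).
  assert (Hln : 1 <= ln (/ eps)).
  { rewrite <- (ln_exp 1). apply ln_le; [apply exp_pos|]. pose proof exp_le_3. lra. }
  destruct (nat_between (/ s) ltac:(lra)) as [M [HM1 HM2]].
  destruct (nat_between (2 * ln (/ eps)) ltac:(lra)) as [L [HL1 HL2]].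
  assert (HMge : (1 <= M)%nat).
  { destruct M; [simpl in HM1; lra| lia]. }
  assert (HLge : (1 <= L)%nat).
  { destruct L; [simpl in HL1; lra| lia]. }
  exists (algo (2 * M) (/ INR M) L), (3 * M * L)%nat. split.
  - rewrite !mult_INR. simpl (INR 3). rewrite pow_1. fold s.
    assert (INR M <= 2 * / s) by lra.
    assert (INR L <= 3 * ln (/ eps)) by lra.
    assert (0 <= INR M) by apply pos_INR. assert (0 <= INR L) by apply pos_INR.
    assert (INR M * INR L <= (2 * / s) * (3 * ln (/ eps))).
    { apply Rmult_le_compat; auto. }
    nra.
  - rewrite Rmult_1_l. apply learn; auto.
    + assert (HiM : / INR M <= s).
      { rewrite <- (Rinv_inv s). apply Rinv_le_contravar; [apply Rinv_0_lt_compat; lra| lra]. }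
      assert (0 <= / INR M) by (left; apply Rinv_0_lt_compat; lra).
      nra.
    + assert (H2L : / eps <= 2 ^ L).
      { rewrite <- (exp_ln (/ eps)) by lra. rewrite <- (exp_ln (2 ^ L)) by (apply pow_lt; lra).
        rewrite ln_pow by lra. pose proof ln2_gt.
        assert (Hl : ln (/ eps) <= INR L * ln 2) by nra.
        destruct (Rle_lt_or_eq_dec _ _ Hl) as [Hl'|Hl']; [left; apply exp_increasing; auto| right; rewrite Hl'; auto]. }
      apply Rle_trans with (/ / eps); [| right; field; lra].
      apply Rinv_le_contravar; [apply Rinv_0_lt_compat; lra| auto].
Qed.
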